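(* Let $P_{II*}=P_{II}$. For partitions $\xi,\upsilon\in P_I$, one has $\mathcal C_{\uparrow\{\downarrow\{\xi\}\}\text{-unc}}=\mathcal C_{\uparrow\{\downarrow\{\upsilon\}\}\text{-unc}}$ if and only if $\xi=\upsilon$.
   Context: Let $n\ge1$, $L=\{1,\dots,n\}$, and for $i\in L$ let $\mathcal H_i$ be a Hilbert space with $1<\dim\mathcal H_i<\infty$; $\mathcal H_X=\bigotimes_{i\in X}\mathcal H_i$ and $\mathcal D_X$ is the set of density operators on $\mathcal H_X$. $P_I$ is the set of partitions of $L$ ordered by refinement. For $\xi\in P_I$, $\mathcal D_{\xi\text{-unc}}=\{\varrho\in\mathcal D_L:\varrho=\bigotimes_{X\in\xi}\varrho_X,\ \varrho_X\in\mathcal D_X\}$, and for $S\subseteq P_I$, $\mathcal D_{S\text{-unc}}=\bigcup_{\xi\in S}\mathcal D_{\xi\text{-unc}}$. $P_{II}$ is the set of nonempty down-sets of $P_I$, ordered by inclusion; $P_{III*}$ is the set of nonempty up-sets of $P_{II*}$. $\downarrow\{\xi\}=\{\upsilon\in P_I:\upsilon\preceq\xi\}$ and $\uparrow\{\boldsymbol\zeta\}=\{\boldsymbol\upsilon\in P_{II}:\boldsymbol\zeta\subseteq\boldsymbol\upsilon\}$. For $\Xi\in P_{III*}$: $\overline\Xi=P_{II*}\setminus\Xi$ and $\mathcal C_{\Xi\text{-unc}}=\bigcap_{\boldsymbol\xi'\in\overline\Xi}(\mathcal D_L\setminus\mathcal D_{\boldsymbol\xi'\text{-unc}})\cap\bigcap_{\boldsymbol\xi\in\Xi}\mathcal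 D_{\boldsymbol\xi\text{-unc}}$. *)

(* Defs.v *)
From HB Require Import structures.
From mathcomp Require Import all_boot all_order all_algebra all_field.
Set Implicit Arguments. Unset Strict Implicit. Unset Printing Implicit Defensive.
Import Order.TTheory GRing.Theory Num.Theory.
Local Open Scope ring_scope.

Section Defs.
Variables (n : nat) (d : 'I_n -> nat).

(* Subsystems L = 'I_n; X : {set 'I_n}.  Orthonormal product basis of
   H_X = (x)_{i in X} C^{d i}: dependent functions on the elements of X. *)
Definition sub (X : {set 'I_n}) := {i : 'I_n | i \in X}.
Definition conf (X : {set 'I_n}) := {dffun forall i : sub X, 'I_(d (val i))}.

(* Linear operators on H_X, as matrices in the product basis. *)
Definition op (X : {set 'I_n}) := conf X -> conf X -> algC.

Definition trace X (A : op X) : algC := \sum_(a : conf X) A a a.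

Definition psd X (A : op X) : Prop :=
  forall v : conf X -> algC,
    0 <= \sum_(a : conf X) \sum_(b : conf X) (v a)^* * A a b * v b.

Definition density X (A : op X) : Prop := psd A /\ trace A = 1.

Definition restr (X : {set 'I_n}) (a : conf [set: 'I_n]) : conf X :=
  [ffun j : sub X => a (exist (fun i => i \in [set: 'I_n]) (val j) (in_setT (val j)))].

Definition PI : {set {set {set 'I_n}}} := [set P | partition P [set: 'I_n]].

Definition finer (u x : {set {set 'I_n}}) : bool :=
  [forall B in u, exists C in x, B \subset C].

Definition D_unc (xi : {set {set 'I_n}}) (rho : op [set: 'I_n]) : Prop :=
  density rho /\
  exists f : forall X : {set 'I_n}, op X,
    (forall X, X \in xi -> density (f X)) /\
    (forall a b, rho a b = \prod_(X in xi) f X (restr X a) (restr X b)).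

Definition DS_unc (S : {set {set {set 'I_n}}}) (rho : op [set: 'I_n]) : Prop :=
  exists2 xi, xi \in S & D_unc xi rho.

Definition down (xi : {set {set 'I_n}}) : {set {set {set 'I_n}}} :=
  [set u in PI | finer u xi].

Definition PII : {set {set {set {set 'I_n}}}} :=
  [set S : {set {set {set 'I_n}}} | [&& S \subset PI, S != set0 &
            [forall x in S, forall u in PI, finer u x ==> (u \in S)]]].

Definition up (Z : {set {set {set 'I_n}}}) : {set {set {set {set 'I_n}}}} :=
  [set S in PII | Z \subset S].

(* C_{Xi-unc}, with complement taken in P_II* = P_II *)
Definition C_unc (Xi : {set {set {set {set 'I_n}}}}) (rho : op [set: 'I_n]) : Prop :=
  (forall S, S \in PII -> S \notin Xi -> ~ DS_unc S rho) /\
  (forall S, S \in Xi -> DS_unc S rho).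

End Defs.

(* Main.v *)
Require Import Defs.
From HB Require Import structures.
From mathcomp Require Import all_boot all_order all_algebra all_field.
From mathcomp Require Import ring.
Set Implicit Arguments. Unset Strict Implicit. Unset Printing Implicit Defensive.
Import Order.TTheory GRing.Theory Num.Theory.
Local Open Scope ring_scope.

Lemma psd_diag n (d : 'I_n -> nat) X (A : op d X) :
  (forall a b, a != b -> A a b = 0) -> (forall a, 0 <= A a a) -> psd A.
Proof.
move=> Hoff Hdiag v; apply: sumr_ge0 => a _.
rewrite (bigD1 a) //= big1 ?addr0; last first.
  by move=> b /negbTE Hb; rewrite Hoff ?mulr0 ?mul0r // eq_sym Hb.
rewrite mulrC mulrA; apply: mulr_ge0 => //; exact: mul_conjC_ge0.
Qed.

Definition zo n (d : 'I_n -> nat) (hd : forall i, (1 < d i)%N) (b : bool) (i : 'I_n) : 'I_(d i) :=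
  if b then Ordinal (hd i) else Ordinal (ltnW (hd i)).

Arguments zo : simpl never.

Lemma zo_inj n (d : 'I_n -> nat) (hd : forall i, (1 < d i)%N) b b' i :
  zo hd b i = zo hd b' i -> b = b'.
Proof. by case: b; case: b' => // /(congr1 val). Qed.

Definition cst n (d : 'I_n -> nat) (hd : forall i, (1 < d i)%N) X (b : bool) : conf d X :=
  [ffun j => zo hd b (val j)].

Definition good n (d : 'I_n -> nat) (hd : forall i, (1 < d i)%N) X (c : conf d X) : bool :=
  (c == cst hd X false) || (c == cst hd X true).

Definition fX n (d : 'I_n -> nat) (hd : forall i, (1 < d i)%N) X : op d X :=
  fun c c' => if (c == c') && good hd c then 2^-1 else 0.

Definition rho0 n (d : 'I_n -> nat) (hd : forall i, (1 < d i)%N) (xi : {set {set 'I_n}}) : op d [set: 'I_n] :=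
  fun a b => \prod_(X in xi) fX hd (restr X a) (restr X b).

Lemma cst_neq n (d : 'I_n -> nat) (hd : forall i, (1 < d i)%N) X :
  X != set0 -> cst hd X false != cst hd X true.
Proof.
case/set0Pn => i Hi; apply/negP => /eqP E.
have := congr1 (fun f : conf d X => f (exist _ i Hi)) E.
by rewrite /= !ffunE => /zo_inj.
Qed.

Lemma density_fX n (d : 'I_n -> nat) (hd : forall i, (1 < d i)%N) X :
  X != set0 -> density (fX hd (X:=X)).
Proof.
move=> HX; split.
  apply: psd_diag => [a b /negbTE Hab|a]; first by rewrite /fX Hab.
  by rewrite /fX; case: ifP => // _; rewrite invr_ge0 ler0n.
have Hn := cst_neq hd HX.
rewrite /trace (bigD1 (cst hd X false)) //= (bigD1 (cst hd X true)) /=; last first.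
  by rewrite eq_sym.
rewrite big1 ?addr0; last first.
  by move=> c /andP [H1 H2]; rewrite /fX /good (negbTE H1) (negbTE H2) andbF.
rewrite /fX /good !eqxx /= orbT.
have H2 : (2 : algC) != 0 by rewrite pnatr_eq0.
by field.
Qed.

Lemma PIP n (xi : {set {set 'I_n}}) :
  xi \in PI n -> [/\ cover xi = [set: 'I_n], trivIset xi & set0 \notin xi].
Proof. by rewrite inE => /and3P [/eqP -> -> ->]. Qed.

Lemma pblock_in n (xi : {set {set 'I_n}}) i : xi \in PI n -> pblock xi i \in xi.
Proof. by case/PIP => Hc _ _; apply: pblock_mem; rewrite Hc inE. Qed.

Lemma mem_pblockT n (xi : {set {set 'I_n}}) i : xi \in PI n -> i \in pblock xi i.
Proof. by case/PIP => Hc _ _; rewrite mem_pblock Hc inE. Qed.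

Lemma pblock_def n (xi : {set {set 'I_n}}) X i : xi \in PI n -> X \in xi -> i \in X ->
  pblock xi i = X.
Proof. by case/PIP => _ Ht _; apply: def_pblock. Qed.

Lemma restr_cst n (d : 'I_n -> nat) (hd : forall i, (1 < d i)%N) X b :
  restr X (cst hd [set: 'I_n] b) = cst hd X b.
Proof. by apply/ffunP => j; rewrite !ffunE. Qed.

Lemma subT_eq n (d : 'I_n -> nat) (a : conf d [set: 'I_n]) (j : sub [set: 'I_n]) :
  a (exist (fun i => i \in [set: 'I_n]) (val j) (in_setT (val j))) = a j.
Proof. by case: j => i p /=; rewrite (bool_irrelevance p (in_setT i)). Qed.

Lemma prod_ind (I : finType) (A : {pred I}) (P : pred I) (c : algC) :
  \prod_(X in A) (if P X then c else 0) = if [forall X in A, P X] then c ^+ #|A| else 0.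
Proof.
case: ifP => [/forall_inP H|/forall_inP H].
  by rewrite -prodr_const; apply: eq_bigr => X HX; rewrite H.
have [X HX HP] : exists2 X, X \in A & ~~ P X.
  by apply/exists_inP; rewrite -negb_forall_in; apply/negP => /forall_inP.
by rewrite (bigD1 X) //= (negbTE HP) mul0r.
Qed.

Lemma rho0_aa n (d : 'I_n -> nat) (hd : forall i, (1 < d i)%N) xi a :
  rho0 hd xi a a = if [forall X in xi, good hd (restr X a)] then 2^-1 ^+ #|xi| else 0.
Proof. by rewrite /rho0 /fX -prod_ind; apply: eq_bigr => X _; rewrite eqxx. Qed.

Lemma rho0_diag n (d : 'I_n -> nat) (hd : forall i, (1 < d i)%N) xi (hxi : xi \in PI n) a b :
  a != b -> rho0 hd xi a b = 0.
Proof.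
move=> Hab.
have [j Hj] : exists j, a j != b j.
  apply/existsP; rewrite -negb_forall; apply/negP => /forallP H.
  by move: Hab; rewrite (_ : a = b) ?eqxx //; apply/ffunP => j; apply/eqP.
set X := pblock xi (val j).
have HX : X \in xi by apply: pblock_in.
rewrite /rho0 (bigD1 X) //= /fX.
suff -> : (restr X a == restr X b) = false by rewrite mul0r.
apply/negP => /eqP /(congr1 (fun f : conf d X => f (exist _ (val j) (mem_pblockT (val j) hxi)))).
by rewrite /= /restr !ffunE !subT_eq; apply/eqP.
Qed.

Lemma half_pow k : (2^-1 : algC) ^+ k *+ (2 ^ k)%N = 1.
Proof. by rewrite -mulr_natr natrX -exprMn mulVf ?expr1n // pnatr_eq0. Qed.

Definition gmap n (d : 'I_n -> nat) (hd : forall i, (1 < d i)%N) (xi : {set {set 'I_n}})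
  (u : {ffun {set 'I_n} -> bool}) : conf d [set: 'I_n] :=
  [ffun j => zo hd (u (pblock xi (val j))) (val j)].

Lemma restr_gmap n (d : 'I_n -> nat) (hd : forall i, (1 < d i)%N) xi (hxi : xi \in PI n) u X :
  X \in xi -> restr X (gmap hd xi u) = cst hd X (u X).
Proof.
move=> HX; apply/ffunP => j; rewrite !ffunE /=.
by rewrite (pblock_def hxi HX (valP j)).
Qed.

Lemma card_S n (d : 'I_n -> nat) (hd : forall i, (1 < d i)%N) xi (hxi : xi \in PI n) :
  #|[set a : conf d [set: 'I_n] | [forall X in xi, good hd (restr X a)]]| = (2 ^ #|xi|)%N.
Proof.
have Hsupp : forall u X, u \in pffun_on false xi predT -> X \notin xi -> u X = false.
  move=> u X /pffun_onP [Hs _] HX; apply/negP => Hu.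
  have : X \in false.-support u by rewrite inE; apply/negP => /eqP Hf; rewrite Hf in Hu.
  by move/(subsetP Hs); apply/negP.
have -> : [set a : conf d [set: 'I_n] | [forall X in xi, good hd (restr X a)]] =
          gmap hd xi @: pffun_on false xi predT.
  apply/setP => a; rewrite inE; apply/idP/idP.
  - move/forall_inP => Hg.
    set u := [ffun X => (X \in xi) && (restr X a == cst hd X true)].
    have Hu : u \in pffun_on false xi predT.
      apply/pffun_onP; split => //; apply/subsetP => X; rewrite inE ffunE.
      by case: (X \in xi).
    apply/imsetP; exists u => //; apply/ffunP => j; rewrite ffunE ffunE.
    set X := pblock xi (val j).
    have HX : X \in xi by apply: pblock_in.
    have HjX : val j \in X by apply: mem_pblockT.
    have Hr : restr X a (exist _ (val j) HjX) = a j by rewrite ffunE subT_eq.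
    rewrite HX /=; move: (Hg X HX); rewrite /good.
    have HX0 : X != set0 by apply/set0Pn; exists (val j).
    case/orP => /eqP E; rewrite E in Hr *; rewrite -Hr ffunE ?eqxx //.
    by rewrite (negbTE (cst_neq hd HX0)).
  - case/imsetP => u Hu ->; apply/forall_inP => X HX.
    by rewrite restr_gmap // /good; case: (u X); rewrite eqxx ?orbT.
rewrite card_in_imset ?card_pffun_on ?card_bool //.
move=> u u' Hu Hu' E; apply/ffunP => X.
case HX: (X \in xi); last by rewrite !Hsupp ?HX.
have [i Hi] : exists i, i \in X.
  apply/set0Pn; case/PIP: hxi => _ _ H0; apply/negP => /eqP E0.
  by rewrite -E0 HX in H0.
have := congr1 (fun f : conf d [set: 'I_n] => f (exist _ i (in_setT i))) E.
by rewrite /= !ffunE /= (pblock_def hxi HX Hi) => /zo_inj.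
Qed.

Lemma density_rho0 n (d : 'I_n -> nat) (hd : forall i, (1 < d i)%N) xi (hxi : xi \in PI n) :
  density (rho0 hd xi).
Proof.
split.
  apply: psd_diag => [a b|a]; first exact: rho0_diag.
  by rewrite rho0_aa; case: ifP => // _; rewrite exprn_ge0 // invr_ge0 ler0n.
rewrite /trace (eq_bigr _ (fun a _ => rho0_aa hd xi a)) -big_mkcond /=.
rewrite (eq_bigl (fun a => a \in [set a : conf d [set: 'I_n] | [forall X in xi, good hd (restr X a)]])); last first.
  by move=> a; rewrite inE.
rewrite sumr_const card_S //.
exact: half_pow.
Qed.

Lemma rho0_ne0 n (d : 'I_n -> nat) (hd : forall i, (1 < d i)%N) xi b :
  rho0 hd xi (cst hd [set: 'I_n] b) (cst hd [set: 'I_n] b) != 0.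
Proof.
rewrite rho0_aa; case: ifP => [_|/forall_inP []].
  by rewrite expf_neq0 // invr_neq0 // pnatr_eq0.
by move=> X _; rewrite restr_cst /good; case: b; rewrite eqxx ?orbT.
Qed.

Lemma unc_finer n (d : 'I_n -> nat) (hd : forall i, (1 < d i)%N) xi (hxi : xi \in PI n)
  zeta (hz : zeta \in PI n) : D_unc zeta (rho0 hd xi) -> finer xi zeta.
Proof.
case=> _ [f [_ Hf]].
apply/forall_inP => B HB; apply: contraT => Hno.
have [i Hi] : exists i, i \in B.
  apply/set0Pn; case/PIP: hxi => _ _ H0; apply/negP => /eqP E0.
  by rewrite -E0 HB in H0.
set C := pblock zeta i.
have HC : C \in zeta by apply: pblock_in.
have HiC : i \in C by apply: mem_pblockT.
have [j HjB HjC] : exists2 j, j \in B & j \notin C.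
  apply/subsetPn; apply/negP => Hs; move/negP: Hno; apply; apply/exists_inP; by exists C.
set m : conf d [set: 'I_n] := [ffun k => zo hd (val k \notin C) (val k)].
have Hm0 : rho0 hd xi m m = 0.
  rewrite rho0_aa; case: ifP => // /forall_inP /(_ B HB).
  rewrite /good; case/orP => /eqP E.
    have := congr1 (fun g : conf d B => g (exist _ j HjB)) E.
    by rewrite /= !ffunE /= HjC => /zo_inj.
  have := congr1 (fun g : conf d B => g (exist _ i Hi)) E.
  by rewrite /= !ffunE /= HiC => /zo_inj.
have Hnz : forall b Y, Y \in zeta ->
    f Y (restr Y (cst hd [set: 'I_n] b)) (restr Y (cst hd [set: 'I_n] b)) != 0.
  move=> b Y HY; apply/negP => /eqP HY0.
  have := rho0_ne0 hd xi b; rewrite Hf; apply/negP/negPn/prodf_eq0.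
  by exists Y => //; rewrite HY0.
have : rho0 hd xi m m != 0.
  rewrite Hf; apply/negP => /prodf_eq0 [Y HY].
  have -> : restr Y m = restr Y (cst hd [set: 'I_n] (Y != C)).
    apply/ffunP => k; rewrite !ffunE /=.
    suff -> : (val k \notin C) = (Y != C) by [].
    case: eqP => [E|/eqP HYC]; first by rewrite -E (valP k).
    apply/negP => HkC.
    have E1 := pblock_def hz HY (valP k).
    have E2 := pblock_def hz HC HkC.
    by move: HYC; rewrite -E1 E2 eqxx.
  by apply/negP; apply: Hnz.
by rewrite Hm0 eqxx.
Qed.

Lemma finer_refl n (x : {set {set 'I_n}}) : finer x x.
Proof. by apply/forall_inP => B HB; apply/exists_inP; exists B. Qed.

Lemma finer_trans n (x y z : {set {set 'I_n}}) : finer x y -> finer y z -> finer x z.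
Proof.
move=> /forall_inP Hxy /forall_inP Hyz; apply/forall_inP => B HB.
have /exists_inP [C HC HBC] := Hxy B HB.
have /exists_inP [D HD HCD] := Hyz C HC.
by apply/exists_inP; exists D => //; apply: subset_trans HCD.
Qed.

Lemma finer_sub n (x y : {set {set 'I_n}}) : x \in PI n -> y \in PI n ->
  finer x y -> finer y x -> x \subset y.
Proof.
move=> hx hy /forall_inP Hxy /forall_inP Hyx; apply/subsetP => B HB.
have /exists_inP [C HC HBC] := Hxy B HB.
have /exists_inP [D HD HCD] := Hyx C HC.
have [i Hi] : exists i, i \in B.
  apply/set0Pn; case/PIP: hx => _ _ H0; apply/negP => /eqP E0.
  by rewrite -E0 HB in H0.
have HiD : i \in D by apply: (subsetP HCD); apply: (subsetP HBC).
have EB := pblock_def hx HB Hi.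
have ED := pblock_def hx HD HiD.
have EBD : B = D by rewrite -EB ED.
have EBC : B = C by apply/eqP; rewrite eqEsubset HBC /= EBD.
by rewrite EBC.
Qed.

Lemma down_PII n (x : {set {set 'I_n}}) : x \in PI n -> down x \in PII n.
Proof.
move=> hx; rewrite inE; apply/and3P; split.
- by apply/subsetP => u; rewrite inE => /andP [].
- by apply/set0Pn; exists x; rewrite inE hx finer_refl.
- apply/forall_inP => y; rewrite inE => /andP [_ Hy]; apply/forall_inP => u Hu.
  by apply/implyP => Huy; rewrite inE Hu (finer_trans Huy Hy).
Qed.

Lemma D_unc_rho0 n (d : 'I_n -> nat) (hd : forall i, (1 < d i)%N) xi (hxi : xi \in PI n) :
  D_unc xi (rho0 hd xi).
Proof.
split; first exact: density_rho0.
exists (fun X => fX hd (X:=X)); split => // X HX.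
apply: density_fX; apply/negP => /eqP E0; case/PIP: hxi => _ _ H0.
by rewrite -E0 HX in H0.
Qed.

Lemma C_rho0 n (d : 'I_n -> nat) (hd : forall i, (1 < d i)%N) xi (hxi : xi \in PI n) :
  C_unc (up (down xi)) (rho0 hd xi).
Proof.
have Hunc := D_unc_rho0 hd hxi.
split.
- move=> S HS; rewrite inE HS /= => Hsub [z Hz Hu].
  move: HS; rewrite inE => /and3P [HSP _ /forall_inP Hdc].
  have hz : z \in PI n by apply: (subsetP HSP).
  have Hf := unc_finer hxi hz Hu.
  move/negP: Hsub; apply; apply/subsetP => u; rewrite inE => /andP [Hu1 Hu2].
  by have /forall_inP/(_ u Hu1)/implyP := Hdc z Hz; apply; apply: finer_trans Hf.
- move=> S; rewrite inE => /andP [_ Hs]; exists xi => //.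
  by apply: (subsetP Hs); rewrite inE hxi finer_refl.
Qed.

Theorem proposition4 (n : nat) (d : 'I_n -> nat)
  (hn : (0 < n)%N) (hd : forall i, (1 < d i)%N)
  (xi ups : {set {set 'I_n}}) (hxi : xi \in PI n) (hups : ups \in PI n) :
  (forall rho : op d [set: 'I_n],
      C_unc (up (down xi)) rho <-> C_unc (up (down ups)) rho)
  <-> xi = ups.
Proof.
split; last by move=> ->.
move=> H.
have [H1 H2] := (H (rho0 hd xi)).1 (C_rho0 hd hxi).
have F1 : finer xi ups.
  have [z Hz Hu] : DS_unc (down ups) (rho0 hd xi).
    by apply: H2; rewrite inE down_PII //=.
  move: Hz; rewrite inE => /andP [hz Hzu].
  exact: finer_trans (unc_finer hxi hz Hu) Hzu.
have F2 : finer ups xi.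
  case: (boolP (down ups \subset down xi)) => [Hs|Hs].
    have : ups \in down xi by apply: (subsetP Hs); rewrite inE hups finer_refl.
    by rewrite inE => /andP [].
  exfalso; apply: (H1 (down xi) (down_PII hxi)).
    by rewrite inE (negbTE Hs) andbF.
  exists xi; first by rewrite inE hxi finer_refl.
  exact: D_unc_rho0.
apply/eqP; rewrite eqEsubset; apply/andP; split; exact: finer_sub.
Qed.
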